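(* Let $n\ge2$, let $q\in\mathbb C$ with $0<|q|<1$ and fix an $n$-th root $q^{1/n}$. Let $A^*$ be the $(n-1)\times(n-1)$ matrix $A^*_{\alpha\beta}=n\delta_{\alpha\beta}-1$. For nonzero complex $\mu_1,\dots,\mu_{n-1}$ set $\mu_n:=q^{-1}(\mu_1\cdots\mu_{n-1})^{-1}$ and $$\Theta^{(1)}(\mu)=\sum_{\vec k\in\mathbb Z^{n-1}}q^{\frac1n\{(\vec k,A^*\vec k)+(\vec 1,\vec k)\}}\mu_1^{k_1}\cdots\mu_{n-1}^{k_{n-1}},$$ where $(\vec k,A^*\vec k)=\sum_{\alpha,\beta}k_\alpha A^*_{\alpha\beta}k_\beta$ and $(\vec1,\vec k)=\sum_\alpha k_\alpha$, and $q^{m/n}:=(q^{1/n})^m$. Then the series converges, and for every $\alpha=1,\dots,n$, $$q\mu_\alpha\,\Theta^{(1)}\bigl(\nabla^\alpha(\mu)\bigr)=\Theta^{(1)}(\mu),$$ where $\nabla^\alpha(\mu_\beta)=q^{2(\delta_{\alpha\beta}-1/n)}\mu_\beta$ for $\beta=1,\dots,n$ (this shift preserves $\prod_\beta\mu_\beta=q^{-1}$). With $q=e^{2\pi i\tau}$, $q^{1/n}\mu_\alpha=e^{2\pi iz_\alpha}$ and $\Omega_{\alpha\beta}=2\tau(\delta_{\alpha\beta}-\frac1n)$, one has $\Theta^{(1)}=\sum_{\vec k\in\mathbb Z^{n-1}}\exp\{\pi i(\vec k,\Omega\vec k)+2\pi i(\vec k,\vec z)\}$, a Riemann theta function.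
   Context: This function is the candidate evolution operator for the $q$-deformed isotropic top on the $SL_q(n)$ Heisenberg double, whose evolution equations are the displayed functional equations in the spectral variables $\mu_1,\dots,\mu_n$ subject to $\prod_{\alpha=1}^n\mu_\alpha=q^{-1}$. *)

(* Defs.v *)
From mathcomp Require Import all_boot all_order all_algebra.
From mathcomp Require Import complex.
From mathcomp Require Import all_classical all_reals all_analysis.
From mathcomp Require Import Rstruct Rstruct_topology.
Import Order.TTheory GRing.Theory Num.Theory numFieldNormedType.Exports.

Set Implicit Arguments.
Unset Strict Implicit.
Unset Printing Implicit Defensive.

Local Open Scope classical_set_scope.
Local Open Scope ring_scope.

(* The complex numbers, as the numClosedFieldType R[i] over Stdlib's reals,
   equipped (via numFieldNormedType.Exports) with its norm topology. *)
Definition C : numClosedFieldType := Rdefinitions.R[i].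

Definition quadA (n : nat) (k : 'I_n.-1 -> int) : int :=
  \sum_(a < n.-1) \sum_(b < n.-1) k a * ((n * (a == b))%:Z - 1) * k b.

(* The general term  q^{((k,A^*k)+(1,k))/n} mu_1^{k_1} ... mu_{n-1}^{k_{n-1}},
   with q^{m/n} := qn ^ m  (qn a fixed n-th root of q). *)
Definition theta_term (n : nat) (qn : C) (mu : 'I_n.-1 -> C)
    (k : 'I_n.-1 -> int) : C :=
  qn ^ (quadA k + \sum_(a < n.-1) k a) * \prod_(a < n.-1) mu a ^ k a.

Definition theta_abs_summable (n : nat) (qn : C) (mu : 'I_n.-1 -> C) : Prop :=
  exists M : C, forall s : seq {ffun 'I_n.-1 -> int}, uniq s ->
    \sum_(k <- s) `|theta_term qn mu k| <= M.

(* Partial sum over the box { k : |k_a| <= N for all a }. *)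
Definition theta_box_sum (n : nat) (qn : C) (mu : 'I_n.-1 -> C) (N : nat) : C :=
  \sum_(j : {ffun 'I_n.-1 -> 'I_(2 * N + 1)})
     theta_term qn mu (fun a => (j a)%:Z - N%:Z).

Definition Theta1 (n : nat) (qn : C) (mu : 'I_n.-1 -> C) : C :=
  limn (theta_box_sum qn mu).

(* mu_alpha for alpha = 1..n (0-indexed), with mu_n := q^{-1} (mu_1...mu_{n-1})^{-1}. *)
Definition mu_full (n : nat) (q : C) (mu : 'I_n.-1 -> C) (alpha : 'I_n) : C :=
  if insub (val alpha) is Some a then mu (a : 'I_n.-1)
  else (q * \prod_(a < n.-1) mu a)^-1.

(* nabla^alpha on the free coordinates mu_1..mu_{n-1}:
   mu_b |-> q^{2(delta_{alpha b} - 1/n)} mu_b = qn^(2 n delta_{alpha b} - 2) mu_b. *)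
Definition nabla (n : nat) (qn : C) (alpha : 'I_n) (mu : 'I_n.-1 -> C)
    (b : 'I_n.-1) : C :=
  qn ^ ((2 * n * (val alpha == val b))%:Z - 2) * mu b.

(* Main.v *)
Require Import Defs.
From mathcomp Require Import all_boot all_order all_algebra.
From mathcomp Require Import complex.
From mathcomp Require Import all_classical all_reals all_analysis.
From mathcomp Require Import Rstruct Rstruct_topology.
From Stdlib Require Import Lia.
From mathcomp Require Import zify ring lra.
Import Order.TTheory GRing.Theory Num.Theory numFieldNormedType.Exports.
Local Open Scope classical_set_scope.
Local Open Scope ring_scope.

Notation RR := Rdefinitions.R.
Lemma normc_real (R : rcfType) (x : R) : `|(x%:C)%C : R[i]| = ((`|x|)%:C)%C.
Proof.
transitivity (((Normc.normc (x%:C)%C)%:C)%C); first by [].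
congr ((_)%:C)%C.
by rewrite /Normc.normc /= expr0n addr0 sqrtr_sqr.
Qed.

Definition CR (R : rcfType) : numClosedFieldType := R[i].
Lemma cvg_RC (R : rcfType) (v : nat -> R) (a : R) : v @ \oo --> a -> (fun N => ((v N)%:C)%C : CR R) @ \oo --> ((a%:C)%C : CR R).
Proof.
move/cvgrPdist_le => H; apply/cvgrPdist_le => eps eps0.
have : 0 < complex.Re eps by move: eps0; rewrite ltcE => /andP[].
move/H; apply: filterS => t ht.
rewrite -rmorphB normc_real.
have : complex.Im eps = 0 by move: eps0; rewrite ltcE => /andP[/eqP -> _].
move: ht; case: eps {eps0} => er ei /= ht -> .
by rewrite lecE /= eqxx.
Qed.



Lemma R_cauchy (R : realType) (v : nat -> R) :
  (forall e : R, 0 < e -> exists N0, forall N, (N0 <= N)%N -> `|v N - v N0| <= e) ->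
  cvgn v.
Proof.
move=> H; apply: (@cauchy_cvg _ (v @ \oo)); apply: cauchy_exP => eps eps0.
have [N0 HN0] := H (eps / 2) ltac:(lra).
exists (v N0); exists N0 => // n /= hn.
rewrite /ball /= distrC.
have := HN0 n hn; lra.
Qed.

Lemma Re_le (w : C) : ((`|complex.Re w|)%:C)%C <= `|w|.
Proof.
case: w => a b.
have -> : `|(a +i* b)%C : C| = ((Normc.normc (a +i* b)%C)%:C)%C by [].
rewrite lecR /=.
rewrite -sqrtr_sqr; apply: ler_wsqrtr; rewrite lerDl; exact: sqr_ge0.
Qed.

Lemma Im_le (w : C) : ((`|complex.Im w|)%:C)%C <= `|w|.
Proof.
case: w => a b.
have -> : `|(a +i* b)%C : C| = ((Normc.normc (a +i* b)%C)%:C)%C by [].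
rewrite lecR /=.
rewrite -sqrtr_sqr; apply: ler_wsqrtr; rewrite lerDr; exact: sqr_ge0.
Qed.

Lemma ReB (x y : C) : complex.Re (x - y) = complex.Re x - complex.Re y.
Proof. by case: x; case: y. Qed.
Lemma ImB (x y : C) : complex.Im (x - y) = complex.Im x - complex.Im y.
Proof. by case: x; case: y. Qed.

Lemma C_cauchy (u : nat -> C) :
  (forall e : RR, 0 < e -> exists N0, forall N, (N0 <= N)%N -> `|u N - u N0| <= (e%:C)%C) ->
  cvgn u.
Proof.
move=> H.
have hre : cvgn (fun N => complex.Re (u N)).
  apply: R_cauchy => e e0; have [N0 HN0] := H e e0; exists N0 => N hN.
  rewrite -ReB -lecR; exact: le_trans (Re_le _) (HN0 N hN).
have him : cvgn (fun N => complex.Im (u N)).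
  apply: R_cauchy => e e0; have [N0 HN0] := H e e0; exists N0 => N hN.
  rewrite -ImB -lecR; exact: le_trans (Im_le _) (HN0 N hN).
have h1 := @cvg_RC _ _ _ hre.
have h2 := @cvg_RC _ _ _ him.
have E : u = (fun N => ((complex.Re (u N))%:C)%C + 'i%C * ((complex.Im (u N))%:C)%C).
  by apply: funext => N; exact: complexE.
rewrite E; apply: cvgP; apply: cvgD; first exact: h1.
apply: cvgM; [exact: cvg_cst | exact: h2].
Qed.

Section G.
Variable m : nat.
Local Notation K := {ffun 'I_m -> int}.
Definition boxp (N : nat) (k : K) : bool := [forall a, (`|k a| <= N)%N].
Definition mkk N (j : {ffun 'I_m -> 'I_(2*N+1)}) : K := [ffun a => (j a)%:Z - N%:Z].
Definition box N : seq K := map (mkk N) (enum {ffun 'I_m -> 'I_(2*N+1)}).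
Definition BS (f : K -> C) N := \sum_(j : {ffun 'I_m -> 'I_(2 * N + 1)}) f (mkk N j).

Lemma BS_box f N : BS f N = \sum_(k <- box N) f k.
Proof. by rewrite /BS /box big_map big_enum. Qed.

Lemma mkk_inj N : injective (mkk N).
Proof.
move=> j1 j2 H; apply/ffunP => a; apply/val_inj.
have := congr1 (fun k : K => k a) H; rewrite !ffunE => /addIr.
by case.
Qed.

Lemma box_uniq N : uniq (box N).
Proof. by rewrite map_inj_uniq ?enum_uniq //; exact: mkk_inj. Qed.

Lemma boxp_mono N N' k : (N <= N')%N -> boxp N k -> boxp N' k.
Proof.
move=> le /forallP H; apply/forallP => a; exact: leq_trans (H a) le.
Qed.

Lemma mem_box N k : (k \in box N) = boxp N k.
Proof.
apply/idP/idP.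
  case/mapP => j _ ->; apply/forallP => a; rewrite ffunE.
  have := ltn_ord (j a); move: (nat_of_ord (j a)) => x hx.
  lia.
move/forallP => H.
have hj : forall a, (absz (k a + N%:Z)%R < 2 * N + 1)%N.
  move=> a; have := H a; move: (k a) => z; lia.
apply/mapP; exists [ffun a => Ordinal (hj a)]; first by rewrite mem_enum.
apply/ffunP => a; rewrite !ffunE /=.
have := H a; move: (k a) => z hz.
by rewrite gez0_abs; lia.
Qed.


Lemma box_bound (s : seq K) : exists N, all (boxp N) s.
Proof.
elim: s => [|k s [N HN]]; first by exists 0%N.
exists (maxn N (\max_(a < m) `|k a|)%N) => /=; apply/andP; split.
  apply/forallP => a; rewrite leq_max; apply/orP; right.
  exact: (leq_bigmax_cond (F := fun a => `|k a|%N)).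
by apply/allP => x /(allP HN); apply: boxp_mono; rewrite leq_maxl.
Qed.

Lemma split_box (f : K -> C) N0 s : uniq s -> (forall k, boxp N0 k -> k \in s) ->
  \sum_(k <- s) f k = \sum_(k <- box N0) f k + \sum_(k <- s | ~~ boxp N0 k) f k.
Proof.
move=> us sub; rewrite (bigID (boxp N0)) /=; congr (_ + _).
rewrite -big_filter; apply: perm_big; apply: uniq_perm.
- exact: filter_uniq.
- exact: box_uniq.
move=> k; rewrite mem_filter mem_box.
by case E: (boxp N0 k) => //=; rewrite sub.
Qed.

Definition abs_sum (f : K -> C) :=
  exists M : C, forall s : seq K, uniq s -> \sum_(k <- s) `|f k| <= M.

Lemma normcE (x : C) : `|x| = ((Normc.normc x)%:C)%C.
Proof. by []. Qed.

Lemma tail (f : K -> C) : abs_sum f -> forall e : RR, 0 < e ->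
  exists N0, forall s, uniq s -> all (fun k => ~~ boxp N0 k) s ->
    \sum_(k <- s) `|f k| <= (e%:C)%C.
Proof.
move=> [M HM] e e0.
pose v (s : seq K) : RR := \sum_(k <- s) Normc.normc (f k).
have vE s : \sum_(k <- s) `|f k| = ((v s)%:C)%C.
  by rewrite /v rmorph_sum; apply: eq_bigr => k _.
pose E := [set x : RR | exists2 s, uniq s & x = v s].
have hs : has_sup E.
  split; first by exists 0, [::]; rewrite // /v big_nil.
  exists (complex.Re M) => x [s us ->].
  by have := HM s us; rewrite vE lecE => /andP[_].
have [x [s0 us0 ->] lt] := sup_adherent e0 hs.
have [N0 HN0] := box_bound s0.
exists N0 => s us hall.
have us' : uniq (s ++ s0).
  rewrite cat_uniq us us0 andbT /=; apply/hasPn => k ks0.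
  apply/negP => ks; have := allP hall k ks; by rewrite (allP HN0 k ks0).
have : v (s ++ s0) <= sup E by apply: sup_upper_bound => //; exists (s ++ s0).
rewrite /v big_cat /= -/(v s) -/(v s0) => H.
rewrite vE lecR; lra.
Qed.


Lemma near_box (f : K -> C) : abs_sum f -> forall e : RR, 0 < e ->
  exists N0, forall s, uniq s -> (forall k, boxp N0 k -> k \in s) ->
    `|\sum_(k <- s) f k - BS f N0| <= (e%:C)%C.
Proof.
move=> hf e e0; have [N0 HN0] := @tail f hf e e0; exists N0 => s us sub.
rewrite (@split_box f N0 s us sub) -BS_box addrC addKr.
apply: le_trans (ler_norm_sum _ _ _) _.
rewrite -big_filter; apply: HN0; first exact: filter_uniq.
exact: filter_all.
Qed.

Lemma BS_cvg (f : K -> C) : abs_sum f -> cvgn (BS f).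
Proof.
move=> hf; apply: C_cauchy => e e0; have [N0 HN0] := @near_box f hf e e0.
exists N0 => N hN; rewrite BS_box; apply: HN0; first exact: box_uniq.
by move=> k hk; rewrite mem_box; exact: boxp_mono hk.
Qed.


Lemma posC (eps : C) : 0 < eps -> eps = ((complex.Re eps)%:C)%C /\ 0 < complex.Re eps.
Proof.
case: eps => a b; rewrite ltcE /= => /andP[/eqP -> h]; split => //.
Qed.

Lemma BS_shift (f : K -> C) (sg tau : K -> K) (D : nat) :
  abs_sum f -> injective sg -> (forall k, sg (tau k) = k) ->
  (forall N k, boxp N k -> boxp (N + D) (tau k)) ->
  BS (fun k => f (sg k)) @ \oo --> limn (BS f).
Proof.
move=> hf si st tb.
have hl := @BS_cvg f hf.
have h0 : (fun N => BS (fun k => f (sg k)) N - BS f N) @ \oo --> (0 : C).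
  apply/cvgr0Pnorm_le => eps eps0.
  have [-> ep] := @posC eps eps0.
  have ep2 : 0 < complex.Re eps / 2 by lra.
  have [N0 HN0] := @near_box f hf _ ep2.
  exists (N0 + D)%N => // N /= hN.
  have e1 : `|BS (fun k => f (sg k)) N - BS f N0| <= ((complex.Re eps / 2)%:C)%C.
    have -> : BS (fun k => f (sg k)) N = \sum_(k <- map sg (box N)) f k.
      by rewrite big_map BS_box.
    apply: HN0; first by rewrite map_inj_uniq // box_uniq.
    move=> k hk; rewrite -(st k); apply: map_f; rewrite mem_box.
    by apply: boxp_mono (tb _ _ hk).
  have e2 : `|BS f N - BS f N0| <= ((complex.Re eps / 2)%:C)%C.
    rewrite BS_box; apply: HN0; first exact: box_uniq.
    move=> k hk; rewrite mem_box; apply: boxp_mono hk; lia.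
  rewrite (_ : BS (fun k => f (sg k)) N - BS f N =
     (BS (fun k => f (sg k)) N - BS f N0) - (BS f N - BS f N0)); last first.
    by rewrite opprB addrA subrK.
  apply: le_trans (ler_normB _ _) _.
  apply: le_trans (lerD e1 e2) _.
  by rewrite -rmorphD /= lecR; lra.
have -> : BS (fun k => f (sg k)) = (fun N => (BS (fun k => f (sg k)) N - BS f N) + BS f N).
  by apply: funext => N; rewrite subrK.
rewrite -[limn (BS f)]add0r; exact: cvgD h0 hl.
Qed.

End G.
Lemma prodXz (F : fieldType) (x : F) (I : finType) (z : I -> int) :
  x != 0 -> \prod_i x ^ z i = x ^ (\sum_i z i).
Proof.
move=> x0; apply: (big_rec2 (fun a b => a = x ^ b)); first by rewrite expr0z.
by move=> i a b _ ->; rewrite expfzDr.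
Qed.

Lemma quadAE n (k : 'I_n.-1 -> int) :
  quadA k = n%:Z * \sum_a k a ^+ 2 - (\sum_a k a) ^+ 2.
Proof.
rewrite /quadA.
transitivity (\sum_(a < n.-1) (n%:Z * k a ^+ 2 - k a * \sum_b k b)).
  apply: eq_bigr => a _.
  transitivity (\sum_(b < n.-1) ((if b == a then n%:Z * k a ^+ 2 else 0) - k a * k b)).
    apply: eq_bigr => b _; rewrite eq_sym; case: eqP => [->|_].
      by rewrite muln1 expr2; ring.
    by rewrite muln0; ring.
  by rewrite sumrB -big_mkcond big_pred1_eq mulr_sumr.
rewrite sumrB -mulr_sumr; congr (_ - _).
by rewrite expr2 mulr_suml.
Qed.


Lemma tt_nabla (n : nat) (qn : C) (mu : 'I_n.-1 -> C) (alpha : 'I_n) (k : 'I_n.-1 -> int) :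
  qn != 0 -> theta_term qn (nabla qn alpha mu) k =
  qn ^ (quadA k + \sum_a k a) *
  qn ^ (\sum_b ((2 * n * (val alpha == val b))%:Z - 2) * k b) * \prod_a mu a ^ k a.
Proof.
move=> qn0; rewrite /theta_term -mulrA; congr (_ * _).
rewrite -prodXz // -big_split /=; apply: eq_bigr => b _.
by rewrite /nabla expfzMl exprz_exp.
Qed.

Lemma shift_inner (n : nat) (q qn : C) (mu : 'I_n.-1 -> C) (alpha : 'I_n) (a0 : 'I_n.-1) :
  qn ^+ n = q -> qn != 0 -> (forall a, mu a != 0) -> val alpha = val a0 ->
  forall k : {ffun 'I_n.-1 -> int},
  q * mu a0 * theta_term qn (nabla qn alpha mu) k =
  theta_term qn mu [ffun a => k a + (a == a0)%:Z].
Proof.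
move=> hq q0 mu0 ha k.
set k' := [ffun a => k a + (a == a0)%:Z].
have sumk' : \sum_a k' a = \sum_a k a + 1.
  rewrite (eq_bigr (fun a => k a + (if a == a0 then 1 else 0))) => [|a _]; last first.
    by rewrite ffunE; case: eqP.
  by rewrite big_split /= -big_mkcond big_pred1_eq.
have sq' : \sum_a k' a ^+ 2 = \sum_a k a ^+ 2 + (2 * k a0 + 1).
  rewrite (eq_bigr (fun a => k a ^+ 2 + (if a == a0 then 2 * k a + 1 else 0))) => [|a _]; last first.
    by rewrite ffunE; case: eqP => _ /=; ring.
  by rewrite big_split /= -big_mkcond big_pred1_eq.
have ee : \sum_b ((2 * n * (val alpha == val b))%:Z - 2) * k b
    = 2 * n%:Z * k a0 - 2 * \sum_b k b.
  rewrite (eq_bigr (fun b => (if b == a0 then 2 * n%:Z * k b else 0) - 2 * k b)) => [|b _]; last first.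
    rewrite ha; case: (eqVneq b a0) => [->|hb]; first by rewrite eqxx /= muln1; ring.
    have -> : (val a0 == val b) = false by apply/eqP => /val_inj h; move: hb; rewrite h eqxx.
    by rewrite /= muln0; ring.
  by rewrite sumrB -big_mkcond big_pred1_eq mulr_sumr.
have pm : \prod_a mu a ^ k' a = \prod_a mu a ^ k a * mu a0.
  rewrite (eq_bigr (fun a => mu a ^ k a * (if a == a0 then mu a else 1))) => [|a _]; last first.
    rewrite ffunE; case: eqP => [->|_] /=; first by rewrite expfzDr // expr1z.
    by rewrite addr0 mulr1.
  by rewrite big_split /= -big_mkcond big_pred1_eq.
have E : qn ^ (quadA k' + \sum_a k' a) =
   qn ^+ n * qn ^ (quadA k + \sum_a k a) * qn ^ (2 * n%:Z * k a0 - 2 * \sum_b k b).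
  rewrite -[qn ^+ n]/(qn ^ n%:Z) -!expfzDr //; congr (qn ^ _).
  rewrite !quadAE sq' sumk'; ring.
rewrite tt_nabla // /theta_term ee E pm -hq; ring.
Qed.

Lemma shift_last (n : nat) (q qn : C) (mu : 'I_n.-1 -> C) (alpha : 'I_n) :
  (0 < n)%N -> q != 0 -> qn != 0 -> (forall a, mu a != 0) -> val alpha = n.-1 ->
  forall k : {ffun 'I_n.-1 -> int},
  q * (q * \prod_a mu a)^-1 * theta_term qn (nabla qn alpha mu) k =
  theta_term qn mu [ffun a => k a - 1].
Proof.
move=> n0 q0 qn0 mu0 ha k.
set k' := [ffun a => k a - 1].
have hn : n%:Z = (n.-1)%:R + 1 by rewrite natz -[1]/(1%:Z) -PoszD addn1 prednK.
have sumk' : \sum_a k' a = \sum_a k a - (n.-1)%:R.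
  rewrite (eq_bigr (fun a => k a - 1)) => [|a _]; last by rewrite ffunE.
  by rewrite sumrB sumr_const card_ord.
have sq' : \sum_a k' a ^+ 2 = \sum_a k a ^+ 2 - 2 * \sum_a k a + (n.-1)%:R.
  rewrite (eq_bigr (fun a => (k a ^+ 2 - 2 * k a) + 1)) => [|a _]; last first.
    by rewrite ffunE; ring.
  by rewrite big_split /= sumrB -mulr_sumr sumr_const card_ord.
have ee : \sum_b ((2 * n * (val alpha == val b))%:Z - 2) * k b = - 2 * \sum_b k b.
  rewrite mulr_sumr; apply: eq_bigr => b _.
  have -> : (val alpha == val b) = false.
    by rewrite ha; apply/negbTE; rewrite neq_ltn ltn_ord orbT.
  by rewrite /= muln0.
have pm : \prod_a mu a ^ k' a = \prod_a mu a ^ k a * (\prod_a mu a)^-1.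
  rewrite -prodfV -big_split /=; apply: eq_bigr => a _.
  by rewrite ffunE expfzDr // exprN1.
have E : qn ^ (quadA k' + \sum_a k' a) =
   qn ^ (quadA k + \sum_a k a) * qn ^ (- 2 * \sum_b k b).
  rewrite -!expfzDr //; congr (qn ^ _).
  rewrite !quadAE sq' sumk' hn; ring.
have hqq : q * (q * \prod_a mu a)^-1 = (\prod_a mu a)^-1.
  by rewrite invfM mulrA mulfV // mul1r.
rewrite hqq tt_nabla // /theta_term ee E pm; ring.
Qed.
Lemma geom_half (R : realType) L : \sum_(i < L) (2^-1 : R) ^+ i <= 2.
Proof.
suff -> : \sum_(i < L) (2^-1 : R) ^+ i = 2 - 2 * 2^-1 ^+ L.
  by rewrite lerBlDr lerDl mulr_ge0 // exprn_ge0.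
elim: L => [|L IH]; first by rewrite big_ord0 expr0 mulr1 subrr.
by rewrite big_ord_recr /= IH exprS; field.
Qed.

Lemma sumB_half (R : realType) N :
  \sum_(i < 2 * N + 1) (2^-1 : R) ^+ `|(i%:Z - N%:Z)%R| <= 4.
Proof.
set x := (2^-1 : R).
have x0 : 0 <= x by rewrite /x invr_ge0.
have x1 : x <= 1 by rewrite /x invf_le1 //; lra.
rewrite -(big_mkord xpredT (fun i => x ^+ `|(i%:Z - N%:Z)%R|)).
rewrite (@big_cat_nat _ _ _ N) //=; last by lia.
have -> : (4 : R) = 2 + 2 by lra.
apply: lerD.
  rewrite big_nat_rev /= add0n.
  apply: le_trans (geom_half R N); rewrite -(big_mkord xpredT (fun i => x ^+ i)).
  rewrite big_nat_cond [X in _ <= X]big_nat_cond; apply: ler_sum => i /andP[/andP[_ hi] _].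
  apply: ler_wiXn2l => //; lia.
rewrite -{1}(add0n N) big_addn.
apply: le_trans (geom_half R (2 * N + 1 - N)); rewrite -(big_mkord xpredT (fun i => x ^+ i)).
apply: ler_sum => i _.
rewrite le_eqVlt; apply/orP; left; apply/eqP; congr (x ^+ _); lia.
Qed.
Lemma rXz_le (R : numFieldType) (r : R) (x y : int) : 0 < r -> r <= 1 -> (y <= x)%R -> r ^ x <= r ^ y.
Proof.
move=> r0 r1 yx.
have [d hd] : exists d : nat, x - y = d%:Z.
  by exists (absz (x - y)); rewrite gez0_abs // subr_ge0.
have -> : x = y + d%:Z by rewrite -hd; ring.
rewrite expfzDr ?gt_eqF //; apply: ler_piMr; first exact: exprz_ge0 (ltW r0).
exact: exprn_ile1 (ltW r0) r1.
Qed.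

Lemma int_sq_ge (j : int) : ((`|j| * `|j| - `|j|)%N%:Z <= j ^+ 2 + j)%R.
Proof. case: j => t; rewrite expr2 /=; [|rewrite NegzE]; lia. Qed.

Lemma exists_T (R : realType) (r y : R) : 0 < r < 1 -> 0 < y -> exists T : nat, r ^+ T <= y.
Proof.
move=> /andP[r0 r1] y0.
have : `|r| < 1 by rewrite ger0_norm ?ltW.
move/cvg_expr/cvgr0Pnorm_lt => /(_ y y0) [T _ HT].
exists T; have := HT T (leqnn T); rewrite /= ger0_norm; first exact: ltW.
exact: exprn_ge0 (ltW r0).
Qed.

Lemma stepA (R : realType) (r rho : R) : 0 < r < 1 -> 0 < rho ->
  exists c : R, forall j : int, r ^ (j ^+ 2 + j) * rho ^ j <= c * 2^-1 ^+ `|j|.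
Proof.
move=> hr rho0; have /andP[r0 r1] := hr.
set P := rho + rho^-1 + 1.
have rhoi0 : 0 < rho^-1 by rewrite invr_gt0.
have P1 : 1 <= P by rewrite /P; lra.
have P0 : 0 < P by lra.
have A1 : forall j : int, rho ^ j <= P ^+ `|j|.
  case=> t /=.
    apply: lerXn2r; rewrite ?nnegrE ?ltW //; rewrite /P; lra.
  change ((rho ^+ t.+1)^-1 <= P ^+ t.+1); rewrite -exprVn.
  apply: lerXn2r; rewrite ?nnegrE ?ltW //; rewrite /P; lra.
have A2 : forall j : int, r ^ (j ^+ 2 + j) <= r ^+ (`|j| * `|j| - `|j|)%N.
  move=> j; have := @rXz_le _ r _ _ r0 (ltW r1) (int_sq_ge j); exact.
have P20 : 0 < 2 * P by lra.
have hy : 0 < (2 * P)^-1 by rewrite invr_gt0.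
have [T hT] := @exists_T _ r _ hr hy.
have hT' : r ^+ T * (2 * P) <= 1.
  by rewrite -(ler_pdivlMr _ _ P20) mul1r.
have A4 : forall t : nat, r ^+ (t * t - t) * (2 * P) ^+ t <= (2 * P) ^+ T.
  move=> t; case: (leqP t T) => htT.
    rewrite -[X in _ <= X]mul1r; apply: ler_pM.
    - exact: exprn_ge0 (ltW r0).
    - exact: exprn_ge0 (ltW P20).
    - exact: exprn_ile1 (ltW r0) (ltW r1).
    - by apply: ler_weXn2l => //; lra.
  have -> : (t * t - t = t.-1 * t)%N by case: t htT => // t' _; rewrite /= mulSn; lia.
  rewrite exprM -exprMn.
  apply: (@le_trans _ _ 1).
    apply: exprn_ile1; first by rewrite mulr_ge0 ?exprn_ge0 ?ltW.
    apply: le_trans hT'; apply: ler_wpM2r; first exact: ltW.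
    apply: ler_wiXn2l; [exact: ltW | exact: ltW | lia].
  by rewrite exprn_ege1 //; lra.
exists ((2 * P) ^+ T) => j.
apply: (@le_trans _ _ (r ^+ (`|j| * `|j| - `|j|)%N * P ^+ `|j|)).
  apply: ler_pM => //; [exact: exprz_ge0 (ltW r0) | exact: exprz_ge0 (ltW rho0)].
have -> : P ^+ `|j| = (2 * P) ^+ `|j| * 2^-1 ^+ `|j|.
  by rewrite -exprMn; congr (_ ^+ _); field.
rewrite mulrA; apply: ler_wpM2r; first by rewrite exprn_ge0 // invr_ge0.
exact: A4.
Qed.

Lemma w1D (R : realType) (r rho : R) : 0 < r < 1 -> 0 < rho -> exists B : R,
  forall N : nat, \sum_(i < 2 * N + 1)
    r ^ ((i%:Z - N%:Z) ^+ 2 + (i%:Z - N%:Z)) * rho ^ (i%:Z - N%:Z) <= B.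
Proof.
move=> hr rho0; have [c hc] := @stepA _ r rho hr rho0.
have c1 : 1 <= c by have := hc 0; rewrite /= !expr0z mulr1 expr0 mulr1.
exists (c * 4) => N.
apply: (@le_trans _ _ (\sum_(i < 2 * N + 1) c * 2^-1 ^+ `|(i%:Z - N%:Z)%R|)).
  by apply: ler_sum => i _; exact: hc.
rewrite -mulr_sumr; apply: ler_wpM2l; first lra.
exact: sumB_half.
Qed.

Lemma CS_int (m : nat) (k : 'I_m -> int) :
  (\sum_a k a) ^+ 2 <= m%:R * \sum_a k a ^+ 2.
Proof.
have H : 0 <= \sum_a \sum_b (k a - k b) ^+ 2.
  by apply: sumr_ge0 => a _; apply: sumr_ge0 => b _; exact: sqr_ge0.
have E : \sum_a \sum_b (k a - k b) ^+ 2 =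
    2 * (m%:R * \sum_a k a ^+ 2 - (\sum_a k a) ^+ 2).
  transitivity (\sum_a (m%:R * k a ^+ 2 + \sum_b k b ^+ 2 - 2 * k a * \sum_b k b)).
    apply: eq_bigr => a _.
    rewrite (eq_bigr (fun b => (k a ^+ 2 + k b ^+ 2) - 2 * k a * k b)) => [|b _]; last by ring.
    rewrite sumrB big_split /= sumr_const card_ord mulr_sumr.
    by congr (_ + _ - _); rewrite mulr_natl.
  rewrite sumrB big_split /= sumr_const card_ord -mulr_sumr -mulr_suml -mulr_sumr.
  rewrite -mulr_natl; ring.
by move: H; rewrite E pmulr_rge0 // subr_ge0.
Qed.

Lemma normXz (x : C) (z : int) : `|x ^ z| = `|x| ^ z.
Proof.
case: z => t; first exact: normrX.
by rewrite NegzE -!exprnN normfV normrX.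
Qed.

Lemma sub_sum_le (T : eqType) (s t : seq T) (F : T -> RR) :
  uniq s -> uniq t -> {subset s <= t} -> (forall x, 0 <= F x) ->
  \sum_(x <- s) F x <= \sum_(x <- t) F x.
Proof.
move=> us ut st F0; rewrite [X in _ <= X](bigID (fun x => x \in s)) /=.
have -> : \sum_(i <- t | i \in s) F i = \sum_(i <- s) F i.
  rewrite -big_filter; apply: perm_big.
  apply: uniq_perm; [exact: filter_uniq | exact: us |].
  by move=> x; rewrite mem_filter; case xs: (x \in s) => //=; rewrite st.
by rewrite lerDl; apply: sumr_ge0 => x _.
Qed.

Lemma quad_ge (n : nat) (k : 'I_n.-1 -> int) : (0 < n)%N ->
  \sum_a k a ^+ 2 <= quadA k.
Proof.
move=> n0; rewrite quadAE.
have hn : n%:Z = (n.-1)%:R + 1 by rewrite natz -[1]/(1%:Z) -PoszD addn1 prednK.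
have := @CS_int n.-1 k; rewrite hn; lra.
Qed.
Lemma theta_abs (n : nat) (qn : C) (mu : 'I_n.-1 -> C) :
  (0 < n)%N -> 0 < `|qn| < 1 -> (forall a, mu a != 0) ->
  @abs_sum n.-1 (fun k : {ffun 'I_n.-1 -> int} => theta_term qn mu k).
Proof.
move=> n0 hq mu0.
set r := Normc.normc qn.
pose rho (a : 'I_n.-1) : RR := Normc.normc (mu a).
have hr : 0 < r < 1.
  move: hq; rewrite normcE.
  by rewrite -[0 : C]/(((0 : RR)%:C)%C) -[1 : C]/(((1 : RR)%:C)%C) !ltcR.
have r0 : 0 < r by case/andP: hr.
have r1 : r <= 1 by case/andP: hr => _ /ltW.
have rho0 : forall a, 0 < rho a.
  move=> a; have := mu0 a; rewrite -normr_gt0 normcE.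
  by rewrite -[0 : C]/(((0 : RR)%:C)%C) ltcR.
have nt : forall k : {ffun 'I_n.-1 -> int}, `|theta_term qn mu k| =
    ((r ^ (quadA k + \sum_a k a) * \prod_a rho a ^ k a)%:C)%C.
  move=> k; rewrite /theta_term normrM normXz normr_prod.
  rewrite rmorphM rmorph_prod /= fmorphXz; congr (_ * _).
  by apply: eq_bigr => a _; rewrite normXz fmorphXz.
have [B hB] : exists B : 'I_n.-1 -> RR, forall a (N : nat),
    \sum_(i < 2 * N + 1) r ^ ((i%:Z - N%:Z) ^+ 2 + (i%:Z - N%:Z)) * rho a ^ (i%:Z - N%:Z)
      <= B a.
  have := fun a => @w1D _ r (rho a) hr (rho0 a).
  by case/boolp.choice => B hB; exists B.
exists (((\prod_a B a)%:C)%C) => s us.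
rewrite (eq_bigr _ (fun k _ => nt k)) -rmorph_sum lecR.
have [N hN] := @box_bound n.-1 s.
pose G (k : {ffun 'I_n.-1 -> int}) := \prod_a (r ^ (k a ^+ 2 + k a) * rho a ^ k a).
have G0 : forall k, 0 <= G k.
  move=> k; apply: prodr_ge0 => a _; apply: mulr_ge0; exact: exprz_ge0 (ltW _).
apply: (@le_trans _ _ (\sum_(k <- s) G k)).
  apply: ler_sum => k _.
  rewrite /G big_split /= prodXz ?gt_eqF //.
  apply: ler_wpM2r; first by apply: prodr_ge0 => a _; exact: exprz_ge0 (ltW (rho0 a)).
  apply: rXz_le => //; rewrite big_split /= lerD2r; exact: quad_ge.
apply: (@le_trans _ _ (\sum_(k <- box n.-1 N) G k)).
  apply: sub_sum_le => //; first exact: (@box_uniq n.-1).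
  by move=> k ks; rewrite mem_box; exact: (allP hN).
rewrite /box big_map big_enum /=.
pose F := fun (a : 'I_n.-1) (i : 'I_(2 * N + 1)) =>
    r ^ ((i%:Z - N%:Z) ^+ 2 + (i%:Z - N%:Z)) * rho a ^ (i%:Z - N%:Z).
rewrite (eq_bigr (fun j : {ffun 'I_n.-1 -> 'I_(2 * N + 1)} => \prod_a F a (j a)));
  last by move=> j _; rewrite /G; apply: eq_bigr => a _; rewrite ffunE.
rewrite (eq_bigl xpredT) // -(bigA_distr_bigA F) /=.
apply: ler_prod => a _; apply/andP; split; last exact: hB.
apply: sumr_ge0 => i _; apply: mulr_ge0; exact: exprz_ge0 (ltW _).
Qed.

Lemma tbs_BS (n : nat) (qn : C) (mu : 'I_n.-1 -> C) :
  theta_box_sum qn mu = @BS n.-1 (fun k => theta_term qn mu k).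
Proof.
apply: funext => N; rewrite /theta_box_sum /BS; apply: eq_bigr => j _.
by congr (theta_term qn mu _); apply: funext => a; rewrite ffunE.
Qed.

Lemma lim_shift (m : nat) (c : C) (f g : {ffun 'I_m -> int} -> C) (sg tau : {ffun 'I_m -> int} -> {ffun 'I_m -> int}) (D : nat) :
  @abs_sum m f -> @abs_sum m g -> injective sg -> (forall k, sg (tau k) = k) ->
  (forall N k, @boxp m N k -> @boxp m (N + D) (tau k)) ->
  (forall k, c * g k = f (sg k)) ->
  c * limn (@BS m g) = limn (@BS m f).
Proof.
move=> hf hg si st tb hcg.
have hgc := @BS_cvg m g hg.
have h1 : @BS m (fun k => c * g k) @ \oo --> c * limn (@BS m g).
  have -> : @BS m (fun k => c * g k) = (fun N => c * @BS m g N).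
    by apply: funext => N; rewrite /BS mulr_sumr.
  by apply: cvgM; [exact: cvg_cst | exact: hgc].
have h2 : @BS m (fun k => c * g k) @ \oo --> limn (@BS m f).
  have -> : @BS m (fun k => c * g k) = @BS m (fun k => f (sg k)).
    by apply: funext => N; apply: eq_bigr => j _; rewrite hcg.
  exact: (@BS_shift m f sg tau D hf si st tb).
by rewrite -(norm_cvg_lim h1) (norm_cvg_lim h2).
Qed.

Theorem mainTheorem13 (n : nat) (q qn : C) :
  (2 <= n)%N -> 0 < `|q| < 1 -> qn ^+ n = q ->
  forall mu : 'I_n.-1 -> C, (forall a, mu a != 0) ->
    [/\ theta_abs_summable qn mu,
        cvgn (theta_box_sum qn mu) &
        forall alpha : 'I_n,
          q * mu_full q mu alpha * Theta1 qn (nabla qn alpha mu) = Theta1 qn mu].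
Proof.
move=> n2 /andP[q0 q1] hq mu mu0.
have n0 : (0 < n)%N by lia.
have qne : q != 0 by rewrite -normr_gt0.
have qn0 : qn != 0.
  apply: contraNneq qne => h; rewrite -hq h expr0n (_ : (n == 0)%N = false) //; lia.
have hqn : 0 < `|qn| < 1.
  rewrite normr_gt0 qn0 /= -(expr_lt1 (n := n)) // -normrX hq //.
have absf := @theta_abs n qn mu n0 hqn mu0.
split => //.
  by rewrite tbs_BS; exact: BS_cvg.
move=> alpha.
have nab0 : forall b, nabla qn alpha mu b != 0.
  by move=> b; rewrite /nabla mulf_neq0 // expfz_neq0.
have absg := @theta_abs n qn (nabla qn alpha mu) n0 hqn nab0.
rewrite /Theta1 !tbs_BS /mu_full.
case: insubP => [a0 _ ha | hna].
  apply: (@lim_shift n.-1 _ _ _ (fun k => [ffun a => k a + (a == a0)%:Z])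
           (fun k => [ffun a => k a - (a == a0)%:Z]) 1 absf absg).
  - move=> k1 k2 h; apply/ffunP => a; have := congr1 (fun k : {ffun _ -> int} => k a) h.
    by rewrite !ffunE => /addIr.
  - by move=> k; apply/ffunP => a; rewrite !ffunE subrK.
  - move=> N k /forallP hk; apply/forallP => a; rewrite ffunE.
    have := hk a; move: (k a) (a == a0) => z [] /=; lia.
  - by move=> k; apply: shift_inner.
have hal : val alpha = n.-1.
  have h1 : (val alpha < n)%N := ltn_ord alpha.
  move: hna h1; rewrite -leqNgt; move: (val alpha) => x; lia.
apply: (@lim_shift n.-1 _ _ _ (fun k => [ffun a => k a - 1])
         (fun k => [ffun a => k a + 1]) 1 absf absg).
- move=> k1 k2 h; apply/ffunP => a; have := congr1 (fun k : {ffun _ -> int} => k a) h.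
  by rewrite !ffunE => /addIr.
- by move=> k; apply/ffunP => a; rewrite !ffunE addrK.
- move=> N k /forallP hk; apply/forallP => a; rewrite ffunE.
  have := hk a; move: (k a) => z; lia.
- by move=> k; apply: shift_last.
Qed.
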